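(* Let $G=(V,E)$ be a finite simple graph of order $n$ and let $T=n-1$. If $(s,x,y,z)$ is an optimal solution of the Infection Model $\mathrm{IM}(G,T)$ (minimizing $\sum_{v\in V}s_v$), then $C=\{v\in V\colon s_v=1\}$ is a minimum zero forcing set of $G$.
   Context: Zero forcing: under the standard color change rule a filled vertex $u$ can force a non-filled vertex $v$ if $v$ is the only non-filled neighbor of $u$; $C\subseteq V$ is a zero forcing set if, starting with $C$ filled and repeatedly forcing, all of $V$ becomes filled. $\mathrm{Z}(G)$ is the minimum size of a zero forcing set, and a minimum zero forcing set is a zero forcing set of size $\mathrm{Z}(G)$. $N(u)$ is the neighborhood of $u$. Infection Model: let $A$ be the set of arcs containing both $(u,v)$ and $(v,u)$ for each edge $\{u,v\}\in E$. The model $\mathrm{IM}(G,T)$ has variables $s_v\in\{0,1\}$ and $x_v\in\{0,1,\dots,T\}$ for $v\in V$, $y_a\in\{0,1\}$ for $a\in A$, and $z\in\{0,1,\dots,T\}$, subject to: (i) $s_v+\sum_{a=(u,v)\in A}y_a=1$ for all $v\in V$; (ii) $x_u-x_v+(T+1)y_a\leq T$ for all $a=(u,v)\in A$; (iii) $x_w-x_v+(T+1)y_a\leq T$ for all $a=(u,v)\in A$ and $w\in N(u)\setminus\{v\}$; (iv) $x_v-z\leq 0$ for all $v\in V$; objective: minimize $\sum_{v\in V}s_v$. *)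

(* Defs.v *)
From mathcomp Require Import all_boot all_order all_algebra.
Set Implicit Arguments. Unset Strict Implicit. Unset Printing Implicit Defensive.
Import Order.TTheory GRing.Theory Num.Theory.

Definition simple_graph (V : finType) (e : rel V) : Prop :=
  symmetric e /\ irreflexive e.

Definition nbhd (V : finType) (e : rel V) (u : V) : {set V} := [set w | e u w].

Definition force_step (V : finType) (e : rel V) (F : {set V}) : {set V} :=
  F :|: [set v | (v \notin F) &&
                 [exists u, [&& u \in F, e u v &
                    [forall w, (e u w && (w != v)) ==> (w \in F)]]]].

(* Filled set after repeatedly forcing (|V| rounds suffice, the process being
   monotone and stabilizing). *)
Definition closure_zf (V : finType) (e : rel V) (C : {set V}) : {set V} :=
  iter #|V| (force_step e) C.

Definition zero_forcing_set (V : finType) (e : rel V) (C : {set V}) : Prop :=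
  closure_zf e C = [set: V].

Definition min_zero_forcing_set (V : finType) (e : rel V) (C : {set V}) : Prop :=
  zero_forcing_set e C /\ forall D : {set V}, zero_forcing_set e D -> #|C| <= #|D|.

(* Infection model IM(G,T). Variables: s : V -> int, x : V -> int,
   y : V -> V -> int (only y u v with e u v, i.e. arcs, are meaningful), z : int. *)
Definition IM_feasible (V : finType) (e : rel V) (T : int)
  (s x : V -> int) (y : V -> V -> int) (z : int) : Prop :=
  [/\ (forall v, s v = 0 \/ s v = 1),
      (forall v, 0 <= x v <= T),
      (forall u v, e u v -> y u v = 0 \/ y u v = 1),
      0 <= z <= T &
  [/\ (forall v, s v + \sum_(u | e u v) y u v = 1),
      (forall u v, e u v -> x u - x v + (T + 1) * y u v <= T),
      (forall u v w, e u v -> e u w -> w != v ->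
                     x w - x v + (T + 1) * y u v <= T) &
      (forall v, x v - z <= 0)]]%R.

Definition IM_objective (V : finType) (s : V -> int) : int := (\sum_v s v)%R.

Definition IM_optimal (V : finType) (e : rel V) (T : int)
  (s x : V -> int) (y : V -> V -> int) (z : int) : Prop :=
  IM_feasible e T s x y z /\
  forall s' x' y' z', IM_feasible e T s' x' y' z' ->
    (IM_objective s <= IM_objective s')%R.

(* Main.v *)
Require Import Defs.
From mathcomp Require Import all_boot all_order all_algebra.
From mathcomp Require Import zify.
Import Order.TTheory GRing.Theory Num.Theory.

Lemma sum_ind (V : finType) (A : {set V}) :
  (\sum_v (if v \in A then 1 else 0 : int) = #|A|%:Z)%R.
Proof.
rewrite -big_mkcond /= sumr_const.
by elim: #|A| => [|k IH] //; rewrite mulrS IH.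
Qed.

Lemma feasible_zf (V : finType) (e : rel V) s x y z :
  IM_feasible e (#|V|.-1)%:Z s x y z -> zero_forcing_set e [set v | s v == 1%R].
Proof.
move=> [s01 x0T y01 z0T [Hi Hii Hiii Hiv]].
set C := [set v | s v == 1%R].
have Csub : forall j, C \subset iter j (force_step e) C.
  elim=> [|j IHj]; first exact: subxx.
  rewrite iterS {1}/force_step; exact: subset_trans IHj (subsetUl _ _).
have key : forall k v, (x v < k%:Z)%R -> v \in iter k (force_step e) C.
  elim=> [|k IH] v hv.
    by case/andP: (x0T v) => *; lia.
  rewrite iterS; set G := iter k (force_step e) C.
  rewrite /force_step.
  case: (boolP (v \in G)) => hin; first by rewrite inE hin.
  have [s0|s1] := s01 v; last first.
    exfalso; move/negP: hin; apply; apply: (subsetP (Csub k)).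
    by rewrite /C inE; apply/eqP.
  have [u /andP [euv /eqP yuv]] : exists u, e u v && (y u v == 1%R).
    case: (boolP [exists u, e u v && (y u v == 1%R)]) => [/existsP //|/existsPn hn].
    exfalso; have := Hi v; rewrite s0 big1; first by rewrite addr0.
    move=> u euv; have := hn u; rewrite euv /=.
    by case: (y01 u v euv) => ->.
  have hu := Hii u v euv; rewrite yuv in hu.
  rewrite !inE (negbTE hin) /=; apply/existsP; exists u.
  rewrite IH; last by lia.
  rewrite euv /=; apply/forallP => w; apply/implyP => /andP [euw wv].
  apply: IH; have := Hiii u v w euv euw wv; rewrite yuv; lia.
apply/setP => v; rewrite inE; apply: key.
have hp : (0 < #|V|)%N by apply/card_gt0P; exists v.
case/andP: (x0T v) => *; lia.
Qed.

Lemma zf_feasible (V : finType) (e : rel V) (D : {set V}) :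
  zero_forcing_set e D -> exists s' x' y' z',
    IM_feasible e (#|V|.-1)%:Z s' x' y' z' /\ (IM_objective s' = #|D|%:Z)%R.
Proof.
move=> H.
pose F k := iter k (force_step e) D.
have rP v : {k | v \in F k & forall j, v \in F j -> (k <= j)%N}.
  have ex : exists k, v \in F k.
    by exists #|V|; move: H; rewrite /zero_forcing_set /closure_zf /F => ->; rewrite inE.
  exists (ex_minn ex); case: ex_minnP => m Pm minm //.
have [r rin rmin] : {r : V -> nat | forall v, v \in F (r v) &
    forall v j, v \in F j -> (r v <= j)%N}.
  exists (fun v => s2val (rP v)) => v; [exact: (s2valP (rP v)) | exact: (s2valP' (rP v))].
have rD v : v \notin D -> (0 < r v)%N.
  move=> hv; case E: (r v) => [|//]; have := rin v; rewrite E /F /=.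
  by move=> h; rewrite h in hv.
pose Pf v u := [&& u \in F (r v).-1, e u v &
   [forall w, (e u w && (w != v)) ==> (w \in F (r v).-1)]].
have forcer v : v \notin D -> exists u, Pf v u.
  move=> hv; have r0 := rD v hv.
  have := rin v; rewrite -(prednK r0) /F iterS -/(F _) /force_step inE.
  case/orP => [h|]; first by have := rmin _ _ h; lia.
  by rewrite inE => /andP [_ /existsP [u hu]]; exists u.
have uF v u : v \notin D -> Pf v u -> (r u < r v)%N.
  move=> hv /andP [hu _]; have := rmin _ _ hu; have := rD v hv; lia.
have wF v u w : v \notin D -> Pf v u -> e u w -> w != v -> (r w < r v)%N.
  move=> hv /and3P [_ _ /forallP hw] euw wv.
  have := hw w; rewrite euw wv /= => /rmin; have := rD v hv; lia.
pose fr v := [pick u | Pf v u].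
pose X v := #|[set w | (r w < r v)%N]|.
have Xlt a b : (r a < r b)%N -> (X a < X b)%N.
  move=> hab; apply: proper_card; apply/properP; split.
    by apply/subsetP => w; rewrite !inE => h; apply: ltn_trans hab.
  by exists a; rewrite !inE ?ltnn.
have XT v : (X v <= #|V|.-1)%N.
  have : (X v < #|[set: V]|)%N.
    apply: proper_card; rewrite properT; apply/eqP => h.
    by have := in_setT v; rewrite -h inE ltnn.
  rewrite cardsT; lia.
exists (fun v => if v \in D then 1%R else 0%R : int), (fun v => (X v)%:Z%R),
  (fun u v => if (v \notin D) && (fr v == Some u) then 1%R else 0%R : int),
  (#|V|.-1)%:Z%R.
split; last exact: sum_ind.
have yP u v : (v \notin D) && (fr v == Some u) -> [/\ v \notin D, Pf v u & e u v].
  move=> /andP [hv /eqP]; rewrite /fr; case: pickP => // u' hu' [<-].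
  by split => //; case/and3P: hu'.
split.
- by move=> v; case: (v \in D); [right|left].
- by move=> v; have := XT v; lia.
- by move=> u v _; case: (_ && _); [right|left].
- lia.
split.
- move=> v; case: (boolP (v \in D)) => hv /=.
    by rewrite big1 ?addr0 // => u _.
  have [u0 hu0] : exists u0, fr v = Some u0 /\ Pf v u0.
    rewrite /fr; case: pickP => [u' hu'|]; first by exists u'.
    by have [u hu] := forcer v hv; move/(_ u); rewrite hu.
  case: hu0 => f0 hu0.
  have e0 : e u0 v by case/and3P: hu0.
  rewrite add0r (bigD1 u0) //= f0 eqxx /= big1 ?addr0 // => u /andP [_ hu].
  by case: eqP => // [[h]]; rewrite h eqxx in hu.
- move=> u v euv; case E: (_ && _).
    have [hv pf _] := yP u v E; have := Xlt _ _ (uF v u hv pf); lia.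
  have := XT u; lia.
- move=> u v w euv euw wv; case E: (_ && _).
    have [hv pf _] := yP u v E; have := Xlt _ _ (wF v u w hv pf euw wv); lia.
  have := XT w; lia.
- by move=> v; have := XT v; lia.
Qed.

Theorem corollary3p3 (V : finType) (e : rel V) (s x : V -> int)
  (y : V -> V -> int) (z : int) :
  simple_graph e ->
  IM_optimal e (#|V|.-1)%:Z s x y z ->
  min_zero_forcing_set e [set v | s v == 1%R].
Proof.
move=> _ [feas opt]; split; first exact: feasible_zf feas.
move=> D /zf_feasible [s' [x' [y' [z' [f' obj]]]]].
have := opt _ _ _ _ f'; rewrite obj.
have -> : (IM_objective s = #|[set v | s v == 1%R]|%:Z)%R.
  rewrite -sum_ind; apply: eq_bigr => v _; rewrite inE.
  by case: feas => s01 _ _ _ _; case: (s01 v) => ->.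
by rewrite lez_nat.
Qed.
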